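(* Let $k$ and $s$ be positive integers and suppose that $K_{k+1,s+1}$ cannot be $k$-page embedded. Let $n$ be a positive integer and $q:=n\bmod s$. Then \[ \nu_k(K_{k+1,n}) \ge q\binom{\frac{n-q}{s}+1}{2} + (s-q)\binom{\frac{n-q}{s}}{2}. \]
   Context: A book with $k$ pages consists of a line (the spine) and $k$ half-planes (the pages) whose common boundary is the spine. A $k$-page drawing of a graph places all vertices on the spine and draws each edge inside a single page; a $k$-page embedding is a $k$-page drawing without crossings. $\nu_k(G)$ is the minimum number of crossings over all $k$-page drawings of $G$. Convention: $\binom{a}{b}=0$ whenever $a<b$. *)

(* Defs.v *)
From mathcomp Require Import all_boot.
Set Implicit Arguments. Unset Strict Implicit. Unset Printing Implicit Defensive.

(* Complete bipartite graph K_{a,b}: vertex set 'I_a + 'I_b,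
   edge set 'I_a * 'I_b (edge (i,j) joins inl i and inr j). *)
Definition bvert (a b : nat) : finType := ('I_a + 'I_b)%type.
Definition bedge (a b : nat) : finType := ('I_a * 'I_b)%type.

(* A k-page drawing of K_{a,b}: the vertices are placed at pairwise distinct
   positions on the spine (pos injective), and each edge is put on a page. *)
Record book_drawing (k a b : nat) := BookDrawing {
  bd_pos  : bvert a b -> nat;
  bd_page : bedge a b -> 'I_k;
  bd_inj  : injective bd_pos
}.

Section Crossings.
Variables (k a b : nat) (D : book_drawing k a b).

Definition elo (e : bedge a b) : nat :=
  minn (bd_pos D (inl e.1)) (bd_pos D (inr e.2)).
Definition ehi (e : bedge a b) : nat :=
  maxn (bd_pos D (inl e.1)) (bd_pos D (inr e.2)).

(* e and f (in this order) cross: same page and endpoints strictly interleave,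
   with e's left endpoint leftmost. Each crossing pair is counted once. *)
Definition ecross (e f : bedge a b) : bool :=
  (bd_page D e == bd_page D f) && [&& elo e < elo f, elo f < ehi e & ehi e < ehi f].

Definition crossings : nat := #|[set ef : bedge a b * bedge a b | ecross ef.1 ef.2]|.
End Crossings.

Definition k_page_embeddable (k a b : nat) : Prop :=
  exists D : book_drawing k a b, crossings D = 0.

Definition nu_ge (k a b m : nat) : Prop :=
  forall D : book_drawing k a b, m <= crossings D.

(* Main.v *)
Require Import Defs.
From mathcomp Require Import all_boot zify.
Set Implicit Arguments. Unset Strict Implicit. Unset Printing Implicit Defensive.

Definition Fs (n s : nat) : nat := \sum_(j < n) j %/ s.
Definition tri (n : nat) : nat := \sum_(j < n) j.

Lemma FsS n s : Fs n.+1 s = Fs n s + n %/ s.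
Proof. by rewrite /Fs big_ord_recr. Qed.
Lemma triS n : tri n.+1 = tri n + n.
Proof. by rewrite /tri big_ord_recr. Qed.
Lemma Fs0 s : Fs 0 s = 0.
Proof. by rewrite /Fs big_ord0. Qed.
Lemma tri0 : tri 0 = 0.
Proof. by rewrite /tri big_ord0. Qed.
Lemma Fs1 n : Fs n 1 = tri n.
Proof. elim: n => [|n IH]; first by rewrite Fs0 tri0. by rewrite FsS triS IH divn1. Qed.
Lemma tri2 n : 2 * tri n = n * n.-1.
Proof. elim: n => [|n IH]; first by rewrite tri0. rewrite triS mulnDr IH /=. case: n {IH} => //= n. nia. Qed.

Lemma Fs_step t : 0 < t -> forall n a, a <= n -> Fs n t.+1 <= tri a + Fs (n - a) t.
Proof.
move=> t0; elim=> [|n IH] a Ha.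
  by move: Ha; rewrite leqn0 => /eqP ->; rewrite Fs0 tri0.
rewrite FsS.
set m := n %/ t.+1.
have hm : m * t.+1 <= n by rewrite leq_divM.
case: (leqP a m) => Ham.
  have Han : a <= n by apply: leq_trans Ham _; rewrite leq_div.
  have -> : n.+1 - a = (n - a).+1 by rewrite subSn.
  rewrite FsS.
  have : m <= (n - a) %/ t by rewrite leq_divRL //; nia.
  have := IH a Han; lia.
have Ha1 : a.-1 <= n by lia.
have -> : n.+1 - a = n - a.-1 by lia.
have := IH _ Ha1.
have -> : a = a.-1.+1 by lia.
rewrite triS /=; lia.
Qed.

Lemma Fs_closed n s : 0 < s -> let q := n %% s in
  Fs n s = q * 'C((n - q) %/ s + 1, 2) + (s - q) * 'C((n - q) %/ s, 2).
Proof.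
move=> s0 q.
have key : forall m r, r <= s -> Fs (m * s + r) s = s * 'C(m, 2) + r * m.
  elim=> [|m IHm] r Hr.
    rewrite mul0n add0n muln0 addn0 /= muln0.
    elim: r Hr => [|r IHr] Hr; first by rewrite Fs0.
    rewrite FsS IHr; last lia. rewrite divn_small //; lia.
  elim: r Hr => [|r IHr] Hr.
    rewrite addn0 mul0n addn0 binS bin1 mulnDr.
    have := IHm s (leqnn s). rewrite mulSn addnC => ->. lia.
  rewrite addnS FsS IHr; last lia.
  rewrite divnMDl // divn_small; last lia. lia.
have hq : q < s by rewrite ltn_mod.
have hn : n - q = n %/ s * s by rewrite /q {1}(divn_eq n s) addnK.
rewrite hn mulnK // {1}(divn_eq n s) key; last lia.
rewrite addn1 binS bin1. set C := 'C(_, 2).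
have -> : s * C = q * C + (s - q) * C by rewrite -mulnDl subnKC // ltnW.
lia.
Qed.

Section Turan.
Variables (V : finType) (adj : rel V).
Hypothesis adjC : forall x y, adj x y = adj y x.

Definition deg (A : {set V}) x := #|[set y in A | adj x y]|.
Definition pairs (A : {set V}) := \sum_(x in A) deg A x.
Definition indep (I : {set V}) := forall x y, x \in I -> y \in I -> x != y -> ~~ adj x y.

Lemma deg_mono (A B : {set V}) (x : V) : A \subset B -> deg A x <= deg B x.
Proof.
move=> AB; apply: subset_leq_card; apply/subsetP=> y; rewrite !inE => /andP[yA ->].
by rewrite (subsetP AB).
Qed.

Lemma turan s : forall A : {set V},
  (forall I : {set V}, I \subset A -> indep I -> #|I| <= s) -> 2 * Fs #|A| s <= pairs A.
Proof.
elim: s => [|t IH] A Hind.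
  rewrite /Fs big1 //= => j _; by rewrite divn0.
case: (set_0Vmem A) => [->|[v0 v0A]]; first by rewrite cards0 Fs0.
pose v := [arg min_(x < v0 in A) deg A x].
have [vA vmin] : v \in A /\ forall y, y \in A -> deg A v <= deg A y.
  by rewrite /v; case: arg_minnP => // x xA H; split.
set d := deg A v.
set S := v |: [set y in A | adj v y].
set R := A :\: S.
have SA : S \subset A.
  apply/subsetP=> y; rewrite !inE => /orP[/eqP->//|/andP[]//].
have cS : #|S| <= d.+1 by rewrite cardsU1; case: (_ \notin _).
have cS1 : 0 < #|S| by apply/card_gt0P; exists v; rewrite !inE eqxx.
have cR : #|R| = #|A| - #|S| by rewrite cardsD (setIidPr SA).
have RA : R \subset A by apply: subsetDl.
have HR : forall I : {set V}, I \subset R -> indep I -> #|I| <= t.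
  move=> I IR indI.
  have vI : v \notin I by apply/negP=> /(subsetP IR); rewrite !inE eqxx.
  have : #|v |: I| <= t.+1.
    apply: Hind.
      apply/subsetP=> y; rewrite !inE => /orP[/eqP->//|/(subsetP IR)].
      by rewrite !inE => /andP[].
    move=> x y; rewrite !inE => /orP[/eqP->|xI] /orP[/eqP->|yI]; rewrite ?eqxx //.
    - move=> _; have := subsetP IR y yI; rewrite !inE.
      by case: (adj v y); case: (y \in A); rewrite ?andbF ?orbT.
    - move=> _; have := subsetP IR x xI; rewrite !inE adjC.
      by case: (adj x v); case: (x \in A); rewrite ?andbF ?orbT.
    - exact: indI.
  by rewrite cardsU1 vI.
have Hsplit : pairs A >= #|S| * d + pairs R.
  rewrite /pairs [X in _ <= X](bigID (fun x => x \in S)) /=.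
  apply: leq_add.
    have -> : \sum_(i in A | i \in S) deg A i = \sum_(i in S) deg A i.
      apply: eq_bigl => x; case xS: (x \in S); rewrite ?andbT ?andbF //.
      exact: (subsetP SA).
    rewrite -sum_nat_const; apply: leq_sum => i iS; apply: vmin; exact: (subsetP SA).
  have -> : \sum_(i in A | i \notin S) deg A i = \sum_(i in R) deg A i.
    by apply: eq_bigl => x; rewrite !inE andbC.
  by apply: leq_sum => i _; apply: deg_mono.
have HRi := IH R HR.
case: t IH HR HRi Hind => [|t] IH HR HRi Hind.
  have R0 : R = set0.
    apply/setP=> x; rewrite in_set0; apply/negbTE/negP=> xR.
    have : #|[set x]| <= 0.
      apply: HR; first by rewrite sub1set.
      by move=> a b; rewrite !inE => /eqP-> /eqP->; rewrite eqxx.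
    by rewrite cards1.
  move: cR; rewrite R0 cards0 => /eqP; rewrite eq_sym subn_eq0 => AS.
  have eqS : #|S| = #|A| by apply/eqP; rewrite eqn_leq AS subset_leq_card.
  rewrite Fs1 tri2; apply: leq_trans Hsplit; rewrite -eqS; apply: leq_trans (leq_addr _ _).
  by apply: leq_mul => //; lia.
have := Fs_step (ltn0Sn t) (subset_leq_card SA).
rewrite -cR => H2; apply: leq_trans Hsplit.
have := tri2 #|S|. nia.
Qed.

End Turan.

Lemma sum_card_pairs (T : finType) (P : rel T) :
  \sum_x #|[set y | P x y]| = #|[set p : T * T | P p.1 p.2]|.
Proof.
rewrite -sum1_card.
under eq_bigr => x _ do rewrite -sum1_card.
rewrite pair_big_dep /=; apply: eq_bigl => p; by rewrite !inE.
Qed.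

Lemma ecross_neq k a b (D : book_drawing k a b) e f : ecross D e f -> e.2 != f.2.
Proof.
rewrite /ecross /elo /ehi => /andP[_ /and3P[h1 h2 h3]].
apply/eqP=> E; move: h1 h2 h3; rewrite E; lia.
Qed.

Section Draw.
Variables (k n : nat) (D : book_drawing k k.+1 n).

Definition L (x y : 'I_n) := [exists ef : bedge k.+1 n * bedge k.+1 n,
  ecross D ef.1 ef.2 && (ef.1.2 == x) && (ef.2.2 == y)].
Definition adjD (x y : 'I_n) := L x y || L y x.

Lemma adjDC x y : adjD x y = adjD y x.
Proof. by rewrite /adjD orbC. Qed.

Lemma cardL : #|[set p : 'I_n * 'I_n | L p.1 p.2]| <= crossings D.
Proof.
rewrite /crossings.
apply: leq_trans (leq_imset_card (fun ef : bedge k.+1 n * bedge k.+1 n => (ef.1.2, ef.2.2)) _).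
apply: subset_leq_card; apply/subsetP=> [[x y]]; rewrite inE => /existsP[ef /andP[/andP[c /eqP e1] /eqP e2]].
apply/imsetP; exists ef; first by rewrite inE.
by rewrite e1 e2.
Qed.

Lemma pairs_le : pairs adjD setT <= 2 * crossings D.
Proof.
rewrite /pairs /deg (eq_bigl xpredT); last by move=> x; rewrite inE.
apply: (@leq_trans (\sum_x (#|[set y | L x y]| + #|[set y | L y x]|))).
  apply: leq_sum => x _.
  apply: (@leq_trans #|[set y | L x y] :|: [set y | L y x]|).
    by apply: subset_leq_card; apply/subsetP=> y; rewrite !inE.
  by rewrite cardsU leq_subr.
rewrite big_split /= !sum_card_pairs mul2n -addnn; apply: leq_add; first exact: cardL.
apply: leq_trans cardL.
apply: leq_trans (leq_imset_card (fun p : 'I_n * 'I_n => (p.2, p.1)) _).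
apply: subset_leq_card; apply/subsetP=> [[x y]]; rewrite inE /= => h.
by apply/imsetP; exists (y, x); rewrite ?inE.
Qed.
End Draw.

Lemma indep_bound k n s (D : book_drawing k k.+1 n) :
  ~ k_page_embeddable k k.+1 s.+1 ->
  forall I : {set 'I_n}, indep (adjD D) I -> #|I| <= s.
Proof.
move=> Hne I indI; rewrite leqNgt; apply/negP => HI.
pose g (i : 'I_s.+1) : 'I_n := enum_val (widen_ord HI i).
have ginj : injective g.
  move=> i j /enum_val_inj /(congr1 val) /= h; exact: val_inj.
pose pos' (v : bvert k.+1 s.+1) : nat :=
  match v with inl a => bd_pos D (inl a) | inr b => bd_pos D (inr (g b)) end.
have pinj : injective pos'.
  move=> [a|b] [a'|b'] /= h; have := bd_inj h; try congruence.
  by case=> /ginj ->.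
pose D' := @BookDrawing k k.+1 s.+1 pos' (fun e => bd_page D (e.1, g e.2)) pinj.
apply: Hne; exists D'; apply/eqP; rewrite cards_eq0; apply/eqP/setP => ef.
rewrite inE in_set0; apply/negbTE/negP => c.
have c' : ecross D (ef.1.1, g ef.1.2) (ef.2.1, g ef.2.2) by exact: c.
have := indI (g ef.1.2) (g ef.2.2) (enum_valP _) (enum_valP _) (ecross_neq c').
apply/negP/negPn; rewrite /adjD; apply/orP; left.
apply/existsP; exists ((ef.1.1, g ef.1.2), (ef.2.1, g ef.2.2)); by rewrite /= c' !eqxx.
Qed.

Theorem proposition13 (k s n : nat) :
  0 < k -> 0 < s -> ~ k_page_embeddable k k.+1 s.+1 -> 0 < n ->
  let q := n %% s in
  nu_ge k k.+1 n (q * 'C((n - q) %/ s + 1, 2) + (s - q) * 'C((n - q) %/ s, 2)).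
Proof.
move=> _ s0 Hne _ q D.
rewrite -Fs_closed //.
have T := @turan _ (adjD D) (@adjDC _ _ D) s setT (fun I _ hI => indep_bound Hne hI).
rewrite cardsT card_ord in T.
have := pairs_le D; lia.
Qed.
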